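(* Let $\mathcal{U}$ be a subspace of $\mathbb{R}^n$ with $\mu(\mathcal{U})<1/2$. Then there exists $\lambda\in\mathbb{R}^n$ with $\lambda\ge 0$ entrywise such that $\operatorname{diag}\big(P_{\mathcal{U}^\perp}\operatorname{diag}^*(\lambda)P_{\mathcal{U}^\perp}\big)=\mathbf{1}$.
   Context: $P_{\mathcal{W}}$ is the orthogonal projector onto a subspace $\mathcal{W}$; $\mu(\mathcal{U})=\max_i\|P_{\mathcal{U}}e_i\|_2^2$ is the coherence. $\operatorname{diag}(X)\in\mathbb{R}^n$ is the diagonal of an $n\times n$ matrix $X$, $\operatorname{diag}^*(\lambda)$ is the diagonal matrix with diagonal $\lambda$, and $\mathbf{1}$ is the all-ones vector. *)

(* Defs.v *)
(* Subspaces of R^n are represented as row spaces of n x n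
   matrices (mxalgebra). *)
From HB Require Import structures.
From mathcomp Require Import all_boot all_order all_algebra.
Set Implicit Arguments. Unset Strict Implicit. Unset Printing Implicit Defensive.
Import Order.TTheory GRing.Theory Num.Theory.
Local Open Scope ring_scope.

Definition is_orth_proj (R : realFieldType) (n : nat) (P U : 'M[R]_n) : Prop :=
  P^T = P /\ P *m P = P /\ (P == U)%MS.

Definition orth_compl (R : realFieldType) (n : nat) (U : 'M[R]_n) : 'M[R]_n :=
  kermx U^T.

(* Coherence mu(U) = max_i ||P_U e_i||_2^2, with P the projector onto U. *)
Definition coherence (R : realFieldType) (n : nat) (P : 'M[R]_n) : R :=
  \big[Num.max/0]_(i < n) \sum_(j < n) (P j i) ^+ 2.

Definition diagv (R : realFieldType) (n : nat) (X : 'M[R]_n) : 'rV[R]_n :=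
  \row_i X i i.

(* Main.v *)
Require Import Defs.
From HB Require Import structures.
From mathcomp Require Import all_boot all_order all_algebra.
From mathcomp Require Import lra.
Import Order.TTheory GRing.Theory Num.Theory.
Local Open Scope ring_scope.

Lemma final_alg (R : realFieldType) (dk dl q m : R) :
  1/2 < dk -> dk <= 1 -> 1/2 < dl -> dl <= 1 -> 0 < q ->
  1 <= - (dk^+2 * q) + (dk - dk^+2) * m ->
  dl^+2 * m - (dl - dl^+2) * q <= 1 -> False.
Proof.
move=> hk1 hk2 hl1 hl2 hq h1 h2.
have a0 : 0 <= dk - dk^+2 by nra.
have b0 : 0 <= dl - dl^+2 by nra.
have e1 : dl^+2 <= - (dk^+2 * dl^+2 * q) + (dk - dk^+2) * dl^+2 * m.
  have := ler_wpM2r (sqr_ge0 dl) h1. by rewrite mul1r; nra.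
have e2 : (dk - dk^+2) * dl^+2 * m <= (dk - dk^+2) + (dk - dk^+2) * (dl - dl^+2) * q.
  have := ler_wpM2l a0 h2. nra.
have e3 : dk^+2 * dl^+2 * q >= (dk - dk^+2) * (dl - dl^+2) * q.
  apply: ler_wpM2r; first lra.
  apply: ler_pM; nra.
have e4 : dk - dk^+2 < dl^+2 by nra.
lra.
Qed.

Section S.
Variables (R : realFieldType) (n : nat) (A : 'M[R]_n).
Hypothesis hd : forall i, A i i = \sum_j A i j ^+ 2.
Hypothesis hh : forall i, 1/2 < A i i.

Lemma offsum i : \sum_(j | j != i) A i j ^+ 2 = A i i - A i i ^+ 2.
Proof. have h : \sum_j A i j ^+ 2 = A i i ^+ 2 + \sum_(j | j != i) A i j ^+ 2 by rewrite (bigD1 i).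
rewrite {1}hd h; lra. Qed.

Lemma dle1 i : A i i <= 1.
Proof.
have h := offsum i.
have : 0 <= \sum_(j | j != i) A i j ^+ 2 by apply: sumr_ge0 => j _; apply: sqr_ge0.
rewrite h => H. have := hh i. nra.
Qed.

Lemma rowsplit (x : 'I_n -> R) i :
  \sum_j A i j ^+ 2 * x j = A i i ^+2 * x i + \sum_(j | j != i) A i j ^+ 2 * x j.
Proof. by rewrite (bigD1 i). Qed.

Lemma upper (x : 'I_n -> R) i m : (forall j, x j <= m) ->
  \sum_(j | j != i) A i j ^+ 2 * x j <= (A i i - A i i ^+ 2) * m.
Proof.
move=> hm; rewrite -offsum mulr_suml; apply: ler_sum => j _.
by apply: ler_wpM2l; [apply: sqr_ge0 | apply: hm].
Qed.

Lemma lower (x : 'I_n -> R) i m : (forall j, m <= x j) ->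
  (A i i - A i i ^+ 2) * m <= \sum_(j | j != i) A i j ^+ 2 * x j.
Proof.
move=> hm; rewrite -offsum mulr_suml; apply: ler_sum => j _.
by apply: ler_wpM2l; [apply: sqr_ge0 | apply: hm].
Qed.

Definition N : 'M[R]_n := \matrix_(j, i) A i j ^+ 2.

Lemma NE (v : 'rV[R]_n) i : (v *m N) 0 i = \sum_j A i j ^+ 2 * v 0 j.
Proof. by rewrite !mxE; apply: eq_bigr => j _; rewrite mxE mulrC. Qed.

Lemma N_unit : N \in unitmx.
Proof.
rewrite unitmxE unitfE; apply/det0P => -[v vn0 hv].
have [j hj] : exists j, v 0 j != 0.
  apply/existsP; apply: contraR vn0 => /existsPn h; apply/eqP/matrixP => a b.
  by rewrite ord1 mxE; apply/eqP; rewrite -[_ == _]negbK h.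
pose i := [arg max_(i > j) `|v 0 i|]%O.
have imax : forall k, `|v 0 k| <= `|v 0 i|.
  rewrite /i; case: (@arg_maxP _ _ _ j xpredT (fun k => `|v 0 k|) isT) => i1 _ H k; exact: H.
have e := NE v i; rewrite hv mxE rowsplit in e.
have h1 : `|\sum_(k | k != i) A i k ^+ 2 * v 0 k| <= (A i i - A i i ^+ 2) * `|v 0 i|.
  apply: le_trans (ler_norm_sum _ _ _) _.
  have := upper (fun k => `|v 0 k|) i (`|v 0 i|) imax; apply: le_trans; apply: ler_sum => k _.
  by rewrite normrM ger0_norm // sqr_ge0.
have h2 : `|\sum_(k | k != i) A i k ^+ 2 * v 0 k| = A i i ^+ 2 * `|v 0 i|.
  have -> : \sum_(k | k != i) A i k ^+ 2 * v 0 k = - (A i i ^+ 2 * v 0 i).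
    by apply/eqP; rewrite -addr_eq0 addrC -e.
  by rewrite normrN normrM ger0_norm // sqr_ge0.
have hi := hh i. have hvj := imax j.
have : 0 < `|v 0 j| by rewrite normr_gt0.
have : 0 <= `|v 0 i| by [].
rewrite h2 in h1.
move=> h0 hpj.
have hp : 0 < A i i * (2 * A i i - 1) by apply: mulr_gt0; lra.
have hvi : 0 < `|v 0 i| by lra.
have := mulr_gt0 hp hvi. nra.
Qed.

Lemma exists_lambda : exists l : 'rV[R]_n,
  (forall i, 0 <= l 0 i) /\ forall i, \sum_j A i j ^+ 2 * l 0 j = 1.
Proof.
pose l : 'rV[R]_n := const_mx 1 *m invmx N.
have hl : forall i, \sum_j A i j ^+ 2 * l 0 j = 1.
  move=> i; rewrite -NE /l -mulmxA mulVmx ?N_unit // mulmx1 mxE //.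
exists l; split => // k0.
rewrite leNgt; apply/negP => hk0.
pose k := [arg min_(k < k0) l 0 k]%O.
pose t := [arg max_(t > k0) l 0 t]%O.
have kmin : forall j, l 0 k <= l 0 j.
  rewrite /k; case: (@arg_minP _ _ _ k0 xpredT (fun k => l 0 k) isT) => i1 _ H j; exact: H.
have tmax : forall j, l 0 j <= l 0 t.
  rewrite /t; case: (@arg_maxP _ _ _ k0 xpredT (fun k => l 0 k) isT) => i1 _ H j; exact: H.
have hk : l 0 k < 0 by apply: le_lt_trans (kmin k0) hk0.
have e1 := hl k; rewrite rowsplit in e1.
have e2 := hl t; rewrite rowsplit in e2.
have u1 := upper (fun j => l 0 j) k (l 0 t) tmax.
have u2 := lower (fun j => l 0 j) t (l 0 k) kmin.
apply: (@final_alg R (A k k) (A t t) (- l 0 k) (l 0 t)); rewrite ?dle1 ?hh //; first lra.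
  rewrite mulrN opprK; lra.
rewrite mulrN opprK; lra.
Qed.
End S.

Theorem lemmaA1 (R : realFieldType) (n : nat) (U PU PUp : 'M[R]_n) :
  is_orth_proj PU U ->
  is_orth_proj PUp (orth_compl U) ->
  coherence PU < 1 / 2 ->
  exists lambda : 'rV[R]_n,
    (forall i, 0 <= lambda 0 i) /\
    diagv (PUp *m diag_mx lambda *m PUp) = const_mx 1.
Proof.
move=> [PT [PP /andP [PU_le UP_le]]] [QT [QQ /andP [QK_le KQ_le]]] hcoh.
set P := PU in PT PP PU_le UP_le hcoh *.
set Q := PUp in QT QQ QK_le KQ_le *.
have Psym : forall i j, P i j = P j i.
  by move=> i j; rewrite -{1}PT mxE.
have Qsym : forall i j, Q i j = Q j i.
  by move=> i j; rewrite -{1}QT mxE.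
have QUT : Q *m U^T = 0 by apply/sub_kermxP.
have [X PX] := submxP PU_le.
have [Y UY] := submxP UP_le.
have QP : Q *m P = 0.
  by rewrite -PT PX trmx_mul mulmxA QUT mul0mx.
have PQ : P *m Q = 0.
  have : (Q *m P)^T = 0 by rewrite QP trmx0.
  by rewrite trmx_mul PT QT.
pose Rm : 'M[R]_n := 1%:M - P - Q.
have RP : Rm *m P = 0 by rewrite /Rm !mulmxBl mul1mx PP QP subr0 subrr.
have RUT : Rm *m U^T = 0 by rewrite UY trmx_mul PT mulmxA RP mul0mx.
have RK : (Rm <= kermx U^T)%MS by apply/sub_kermxP.
have [Z RZ] := submxP (submx_trans RK KQ_le).
have RQ : Rm *m Q = 0 by rewrite /Rm !mulmxBl mul1mx PQ QQ subr0 subrr.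
have RRT : Rm *m Rm^T = 0 by rewrite {2}RZ trmx_mul QT mulmxA RQ mul0mx.
have R0 : forall i j, Rm i j = 0.
  move=> i j.
  have h : \sum_k Rm i k * Rm i k = 0.
    transitivity (\sum_k Rm i k * Rm^T k i).
      by apply: eq_bigr => k _; rewrite [Rm^T _ _]mxE.
    by have := congr1 (fun M : 'M[R]_n => M i i) RRT; rewrite !mxE.
  have hnn : forall k, xpredT k -> 0 <= Rm i k * Rm i k.
    by move=> k _; rewrite -expr2 sqr_ge0.
  have := psumr_eq0P hnn h (i := j) isT.
  by move=> /eqP; rewrite mulf_eq0 orbb => /eqP.
have Qd : forall i, Q i i = 1 - P i i.
  move=> i; have := R0 i i; rewrite /Rm !mxE eqxx /=. lra.
have Pd : forall i, P i i = \sum_j P j i ^+ 2.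
  move=> i; rewrite -{1}PP mxE; apply: eq_bigr => j _; by rewrite Psym expr2.
have Plt : forall i, P i i < 1 / 2.
  move=> i; rewrite Pd; apply: le_lt_trans hcoh.
  exact: (le_bigmax 0 (fun i => \sum_(j < n) P j i ^+ 2) i).
have hd : forall i, Q i i = \sum_j Q i j ^+ 2.
  move=> i; rewrite -{1}QQ mxE; apply: eq_bigr => j _; by rewrite (Qsym j i) expr2.
have hh : forall i, 1 / 2 < Q i i.
  move=> i; rewrite Qd; have := Plt i; lra.
have [l [l0 hl]] := @exists_lambda R n Q hd hh.
exists l; split => //.
apply/matrixP => a b; rewrite ord1 !mxE -(hl b).
apply: eq_bigr => j _; rewrite mul_mx_diag mxE (Qsym j b) expr2; lra.
Qed.
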